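(* Let $f$ be a positive definite function and let $W=\{w_1,\dots,w_N\}\subset V$ be a norming set for $\mathcal{B}_M$. Then for every signal $x\in\mathcal{L}(G)$ its GBF interpolant $\mathrm{I}_W x$ satisfies $$\max_{v\in V}|x(v)-\mathrm{I}_W x(v)|\le\big(1+\|(\mathbf{S}_W\mathbf{B}_M)^{-1}\|\big)\Big(\sum_{k=M+1}^n\hat{f}_k\Big)^{1/2}\|x\|_{K_f}.$$
   Context: Let $G$ be a graph with vertex set $V=\{v_1,\dots,v_n\}$, symmetric non-negative weighted adjacency matrix $\mathbf{A}$, degree matrix $\mathbf{D}=\mathrm{diag}(\sum_k\mathbf{A}_{ik})$ (positive), and normalized Laplacian $\mathbf{L}=\mathbf{I}_n-\mathbf{D}^{-1/2}\mathbf{A}\mathbf{D}^{-1/2}$. Signals are vectors in $\mathcal{L}(G)\cong\mathbb{R}^n$ with euclidean norm and standard basis $e_1,\dots,e_n$. Fix an orthonormal eigendecomposition $\mathbf{L}=\mathbf{U}\,\mathrm{diag}(\lambda_1,\dots,\lambda_n)\mathbf{U}^\intercal$, $\lambda_1\le\dots\le\lambda_n$, with columns $u_1,\dots,u_n$. Fourier transform $\hat{x}=\mathbf{U}^\intercal x$; convolution operator $\mathbf{C}_x=\mathbf{U}\,\mathrm{diag}(\hat{x})\mathbf{U}^\intercal$. For $f\in\mathcal{L}(G)$ let $(\mathbf{K}_f)_{ij}=(\mathbf{C}_{e_j}f)(v_i)$; $f$ is a positive definite function if $\mathbf{K}_f$ is symmetric strictly positive definite; then $\|x\|_{K_f}=\sqrt{x^\intercal\mathbf{K}_f^{-1}x}$.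 For distinct nodes $w_k=v_{j_k}$, $k=1,\dots,N$, let $\mathbf{K}_{f,W}\in\mathbb{R}^{N\times N}$ have entries $(\mathbf{K}_{f,W})_{kl}=(\mathbf{C}_{e_{j_l}}f)(w_k)$ (invertible); the GBF interpolant is $\mathrm{I}_W x=\sum_{k=1}^N c_k\mathbf{C}_{e_{j_k}}f$ where $c$ solves $\mathbf{K}_{f,W}c=(x(w_1),\dots,x(w_N))^\intercal$. Let $\mathcal{B}_M=\mathrm{span}\{u_1,\dots,u_M\}$, $\mathbf{S}_W x(v)=x(v)$ for $v\in W$ and $0$ otherwise, $\mathbf{B}_M x=\sum_{k=1}^M(u_k^\intercal x)u_k$. $W$ is a norming set for $\mathcal{B}_M$ if $\mathbf{S}_W\mathbf{B}_M$ is injective on $\mathcal{B}_M$; $\|(\mathbf{S}_W\mathbf{B}_M)^{-1}\|$ is the operator norm of the inverse of $\mathbf{S}_W\mathbf{B}_M|_{\mathcal{B}_M}$ on its image $\mathbf{S}_W(\mathcal{B}_M)$ with respect to the euclidean norm. *)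

(* Defs.v *)
From HB Require Import structures.
From mathcomp Require Import all_boot all_order all_algebra.
From mathcomp Require Import boolp classical_sets reals.
Set Implicit Arguments. Unset Strict Implicit. Unset Printing Implicit Defensive.
Import Order.TTheory GRing.Theory Num.Theory.
Local Open Scope ring_scope.
Local Open Scope classical_set_scope.

Section GBF.
Variables (R : realType) (n : nat).

Definition deg (A : 'M[R]_n) (i : 'I_n) : R := \sum_k A i k.
Definition Dmhalf (A : 'M[R]_n) : 'M[R]_n :=
  diag_mx (\row_i (Num.sqrt (deg A i))^-1).
Definition normLap (A : 'M[R]_n) : 'M[R]_n :=
  1%:M - Dmhalf A *m A *m Dmhalf A.

Definition fourier (U : 'M[R]_n) (x : 'cV[R]_n) : 'cV[R]_n := U^T *m x.
Definition convop (U : 'M[R]_n) (x : 'cV[R]_n) : 'M[R]_n :=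
  U *m diag_mx (fourier U x)^T *m U^T.
Definition evec (j : 'I_n) : 'cV[R]_n := delta_mx j 0.
Definition Kf (U : 'M[R]_n) (f : 'cV[R]_n) : 'M[R]_n :=
  \matrix_(i, j) (convop U (evec j) *m f) i 0.
Definition posdef_fun (U : 'M[R]_n) (f : 'cV[R]_n) : Prop :=
  (Kf U f)^T = Kf U f /\
  forall x : 'cV[R]_n, x != 0 -> 0 < (x^T *m Kf U f *m x) 0 0.
Definition knorm (U : 'M[R]_n) (f x : 'cV[R]_n) : R :=
  Num.sqrt ((x^T *m invmx (Kf U f) *m x) 0 0).
Definition enorm (x : 'cV[R]_n) : R := Num.sqrt (\sum_i x i 0 ^+ 2).

Definition KfW (U : 'M[R]_n) (f : 'cV[R]_n) (N : nat) (w : 'I_N -> 'I_n)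
  : 'M[R]_N := \matrix_(k, l) (convop U (evec (w l)) *m f) (w k) 0.
Definition interp (U : 'M[R]_n) (f : 'cV[R]_n) (N : nat) (w : 'I_N -> 'I_n)
  (x : 'cV[R]_n) : 'cV[R]_n :=
  let c := invmx (KfW U f w) *m (\col_k x (w k) 0) in
  \sum_(k < N) c k 0 *: (convop U (evec (w k)) *m f).

(* B_M = span{u_1,...,u_M} (0-based: columns k with k < M) *)
Definition inBM (U : 'M[R]_n) (M : nat) (y : 'cV[R]_n) : Prop :=
  exists a : 'I_n -> R, y = \sum_(k < n | (k < M)%N) a k *: col k U.
Definition BM (U : 'M[R]_n) (M : nat) (x : 'cV[R]_n) : 'cV[R]_n :=
  \sum_(k < n | (k < M)%N) ((col k U)^T *m x) 0 0 *: col k U.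
Definition SW (N : nat) (w : 'I_N -> 'I_n) (x : 'cV[R]_n) : 'cV[R]_n :=
  \col_v (if v \in codom w then x v 0 else 0).
Definition norming (U : 'M[R]_n) (M N : nat) (w : 'I_N -> 'I_n) : Prop :=
  forall y1 y2, inBM U M y1 -> inBM U M y2 ->
    SW w (BM U M y1) = SW w (BM U M y2) -> y1 = y2.
(* ||(S_W B_M)^{-1}||: operator norm of the inverse on S_W(B_M),
   i.e. sup over nonzero z = S_W B_M y (y in B_M) of ||y|| / ||z||
   (sup of the empty set is 0, the norm of the zero operator) *)
Definition opnorm_inv (U : 'M[R]_n) (M N : nat) (w : 'I_N -> 'I_n) : R :=
  sup [set r : R | exists y : 'cV[R]_n, [/\ inBM U M y,
        SW w (BM U M y) != 0 & r = enorm y / enorm (SW w (BM U M y))]].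

End GBF.

(* Main.v *)
Require Import Defs.
From HB Require Import structures.
From mathcomp Require Import all_boot all_order all_algebra.
From mathcomp Require Import boolp classical_sets reals.
From mathcomp Require Import ring lra.
Import Order.TTheory GRing.Theory Num.Theory.
Local Open Scope ring_scope.

Section Aux.
Context {R : realType}.

Definition Emb {m k : nat} (g : 'I_k -> 'I_m) : 'M[R]_(m, k) :=
  \matrix_(i, j) ((i == g j)%:R).

Lemma Emb_tr_mul m k p (g : 'I_k -> 'I_m) (Y : 'M[R]_(m, p)) :
  (Emb g)^T *m Y = \matrix_(j, l) Y (g j) l.
Proof.
apply/matrixP => j l; rewrite !mxE (bigD1 (g j)) //= !mxE eqxx mul1r big1 ?addr0 //.
by move=> i /negbTE ni; rewrite !mxE ni mul0r.
Qed.

Lemma mul_Emb m k p (g : 'I_k -> 'I_m) (Y : 'M[R]_(p, m)) :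
  Y *m Emb g = \matrix_(l, j) Y l (g j).
Proof.
apply/matrixP => l j; rewrite !mxE (bigD1 (g j)) //= !mxE eqxx mulr1 big1 ?addr0 //.
by move=> i /negbTE ni; rewrite !mxE ni mulr0.
Qed.

Lemma Emb_orth m k (g : 'I_k -> 'I_m) : injective g -> (Emb g)^T *m Emb g = 1%:M.
Proof.
by move=> ig; rewrite Emb_tr_mul; apply/matrixP => j l; rewrite !mxE (inj_eq ig).
Qed.

Lemma Emb_Embt m k (g : 'I_k -> 'I_m) (z : 'cV[R]_m) : injective g ->
  Emb g *m ((Emb g)^T *m z) = \col_i (if i \in codom g then z i 0 else 0).
Proof.
move=> ig; rewrite Emb_tr_mul; apply/matrixP => i l; rewrite !mxE (ord1 l).
case: (boolP (i \in codom g)) => [/codomP [j ->] | ni].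
  rewrite (bigD1 j) //= !mxE eqxx mul1r big1 ?addr0 // => j' nj.
  by rewrite !mxE (inj_eq ig) eq_sym (negbTE nj) mul0r.
rewrite big1 // => j _; rewrite !mxE.
have -> : (i == g j) = false.
  by apply/negbTE; apply: contraNneq ni => ->; apply: codom_f.
by rewrite mul0r.
Qed.

Lemma dotE m (z : 'cV[R]_m) : (z^T *m z) 0 0 = \sum_i z i 0 ^+ 2.
Proof. by rewrite mxE; apply: eq_bigr => i _; rewrite mxE expr2. Qed.

Lemma rdotE m (z : 'rV[R]_m) : (z *m z^T) 0 0 = \sum_i z 0 i ^+ 2.
Proof. by rewrite mxE; apply: eq_bigr => i _; rewrite mxE expr2. Qed.

Lemma enormE m (z : 'cV[R]_m) : enorm z = Num.sqrt ((z^T *m z) 0 0).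
Proof. by rewrite dotE. Qed.

Lemma enorm_ge0 m (z : 'cV[R]_m) : 0 <= enorm z.
Proof. exact: sqrtr_ge0. Qed.

Lemma enorm_sq m (z : 'cV[R]_m) : enorm z ^+ 2 = (z^T *m z) 0 0.
Proof.
by rewrite dotE /enorm sqr_sqrtr // sumr_ge0 // => i _; rewrite sqr_ge0.
Qed.

Lemma enorm_comp m (z : 'cV[R]_m) i : `|z i 0| <= enorm z.
Proof.
rewrite /enorm -sqrtr_sqr; apply: ler_wsqrtr.
by rewrite (bigD1 i) //= lerDl sumr_ge0 // => j _; exact: sqr_ge0.
Qed.

Lemma enorm_iso m p (A : 'M[R]_(p, m)) z : A^T *m A = 1%:M -> enorm (A *m z) = enorm z.
Proof.
by move=> AA; rewrite !enormE trmx_mul mulmxA -(mulmxA z^T) AA mulmx1.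
Qed.

Definition cst {m p} (T : 'M[R]_(m,p)) := Num.sqrt (\sum_i (\sum_j `|T i j|) ^+ 2).

Lemma normbound m p (T : 'M[R]_(m,p)) z : enorm (T *m z) <= cst T * enorm z.
Proof.
rewrite {2}/enorm /cst -sqrtrM ?sumr_ge0 // => [|i _]; last exact: sqr_ge0.
apply: ler_wsqrtr; rewrite mulr_suml; apply: ler_sum => i _.
have h : `|(T *m z) i 0| <= (\sum_j `|T i j|) * enorm z.
  rewrite mxE mulr_suml; apply: le_trans (ler_norm_sum _ _ _) _; apply: ler_sum => j _.
  by rewrite normrM ler_wpM2l // enorm_comp.
rewrite -real_normK ?num_real // expr2.
apply: le_trans (ler_pM (normr_ge0 _) (normr_ge0 _) h h) _.
rewrite mulrACA -expr2 -[enorm z * enorm z]expr2 enorm_sq dotE.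
by rewrite expr2.
Qed.

Lemma unit_of_ker m (S : 'M[R]_m) : (forall d : 'rV_m, d *m S = 0 -> d = 0) -> S \in unitmx.
Proof.
move=> h; rewrite -row_free_unit -kermx_eq0; apply/eqP/row_matrixP => i.
by rewrite row0; apply: h; rewrite -row_mul mulmx_ker row0.
Qed.

Lemma rowv_mul m p (v : 'I_m) (Y : 'M[R]_(m, p)) j : ((delta_mx 0 v : 'rV[R]_m) *m Y) 0 j = Y v j.
Proof. by rewrite -rowE mxE. Qed.


Lemma diag_quad m (d p : 'rV[R]_m) :
  (p *m diag_mx d *m p^T) 0 0 = \sum_k d 0 k * p 0 k ^+ 2.
Proof.
rewrite mul_mx_diag mxE; apply: eq_bigr => k _; rewrite !mxE; ring.
Qed.

Lemma scalar_CS m (F a b : 'I_m -> R) : (forall k, 0 < F k) ->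
  (\sum_k a k * b k) ^+ 2 <= (\sum_k F k * a k ^+ 2) * (\sum_k (F k)^-1 * b k ^+ 2).
Proof.
move=> Fp.
set A := \sum_k F k * a k ^+ 2; set B := \sum_k a k * b k;
set C := \sum_k (F k)^-1 * b k ^+ 2.
have A0 : 0 <= A by apply: sumr_ge0 => k _; rewrite mulr_ge0 ?sqr_ge0 ?ltW.
have C0 : 0 <= C by apply: sumr_ge0 => k _; rewrite mulr_ge0 ?sqr_ge0 ?invr_ge0 ?ltW.
case: (ltgtP A 0) => [|Ap|AE]; first by rewrite ltNge A0.
  have key : forall t, 0 <= t ^+ 2 * A - 2%:R * t * B + C.
    move=> t; have -> : t ^+ 2 * A - 2%:R * t * B + C =
        \sum_k F k * (t * a k - b k / F k) ^+ 2.
      rewrite /A /B /C mulr_sumr mulr_sumr -sumrN -!big_split /=.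
      apply: eq_bigr => k _; have := Fp k; rewrite lt0r => /andP[Fk _]; field; exact Fk.
    by apply: sumr_ge0 => k _; rewrite mulr_ge0 ?sqr_ge0 ?ltW.
  have := key (B / A).
  have -> : (B / A) ^+ 2 * A - 2%:R * (B / A) * B + C = C - B ^+ 2 / A.
    by field; rewrite gt_eqF.
  by rewrite subr_ge0 ler_pdivrMr // mulrC.
have a0 : forall k, a k = 0.
  have h0 : forall i, predT i -> 0 <= F i * a i ^+ 2.
    by move=> i _; rewrite mulr_ge0 ?sqr_ge0 ?ltW.
  move=> k; have /eqP := psumr_eq0P h0 AE (isT : predT k).
  by rewrite mulf_eq0 gt_eqF // orFb sqrf_eq0 => /eqP.
rewrite /B big1 ?expr0n ?AE ?mul0r // => k _; by rewrite a0 mul0r.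
Qed.

Lemma enorm_eq0 m (z : 'cV[R]_m) : enorm z = 0 -> z = 0.
Proof.
move=> /eqP; rewrite /enorm sqrtr_eq0 => h.
have S0 : \sum_i z i 0 ^+ 2 = 0.
  by apply/eqP; rewrite eq_le h sumr_ge0 // => i _; rewrite sqr_ge0.
apply/matrixP => i j; rewrite (ord1 j) mxE.
have h0 : forall i, predT i -> 0 <= z i 0 ^+ 2 by move=> k _; rewrite sqr_ge0.
by have /eqP := psumr_eq0P h0 S0 (isT : predT i); rewrite sqrf_eq0 => /eqP.
Qed.

Lemma enorm0 m : enorm (0 : 'cV[R]_m) = 0.
Proof. by rewrite /enorm big1 ?sqrtr0 // => i _; rewrite mxE expr0n. Qed.

Lemma mxBij m p (A B : 'M[R]_(m,p)) i j : (A - B) i j = A i j - B i j.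
Proof. by rewrite !mxE. Qed.
Lemma mxDij m p (A B : 'M[R]_(m,p)) i j : (A + B) i j = A i j + B i j.
Proof. by rewrite !mxE. Qed.
Lemma rdot_eq0 m (z : 'rV[R]_m) : (z *m z^T) 0 0 = 0 -> z = 0.
Proof.
move=> h; apply: trmx_inj; rewrite trmx0; apply: enorm_eq0.
by rewrite enormE trmxK h sqrtr0.
Qed.
Lemma ker_gram m p (Hm : 'M[R]_(m, p)) (d : 'rV[R]_p) :
  d *m (Hm^T *m Hm) = 0 -> d *m Hm^T = 0.
Proof.
move=> dQ; apply: rdot_eq0.
by rewrite trmx_mul trmxK !mulmxA -(mulmxA d) dQ mul0mx mxE.
Qed.
Lemma ev_bound m (v : 'I_m) (q : 'rV[R]_m) :
  (((delta_mx 0 v : 'rV[R]_m) - q) *m ((delta_mx 0 v : 'rV[R]_m) - q)^T) 0 0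
    <= (1 + enorm q^T) ^+ 2.
Proof.
set t := enorm q^T.
have qv : `|q 0 v| <= t by have := @enorm_comp _ q^T v; rewrite mxE.
have t0 : 0 <= t by apply: enorm_ge0.
have tt : (q *m q^T) 0 0 = t ^+ 2 by rewrite /t enorm_sq trmxK.
rewrite linearB /= !mulmxBl !mulmxBr !mxBij !rowv_mul tt trmx_delta -colE !mxE eqxx.
move: qv; rewrite ler_norml => /andP[h1 h2].
rewrite /=; nra.
Qed.
Lemma gram_quad m p (al : 'rV[R]_p) (Hm : 'M[R]_(m,p)) :
  al *m Hm^T *m (al *m Hm^T)^T = al *m (Hm^T *m Hm) *m al^T.
Proof. by rewrite trmx_mul trmxK !mulmxA. Qed.
End Aux.
Arguments Emb_orth {R m k g}.
Arguments Emb_Embt {R m k g} z.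

Section Graph.
Variables (R : realType) (n : nat) (U : 'M[R]_n) (f : 'cV[R]_n).
Hypothesis UU : U^T *m U = 1%:M.
Hypothesis Fpos : forall k, 0 < fourier U f k 0.

Let Fc := fourier U f.
Let D := diag_mx Fc^T.
Let K := Kf U f.

Lemma UUt : U *m U^T = 1%:M.
Proof. exact: mulmx1C. Qed.

Lemma Kf_eq : K = U *m D *m U^T.
Proof.
apply/matrixP => i j.
have -> : (U *m D *m U^T) i j = (U *m D *m U^T *m evec R j) i 0 by rewrite /evec -colE [RHS]mxE.
rewrite /K /Kf mxE /convop /fourier -!mulmxA; congr ((U *m _) i 0).
by apply/matrixP => k l; rewrite (ord1 l) /D !mul_diag_mx !mxE mulrC.
Qed.

Definition qform (p : 'rV[R]_n) := \sum_k Fc k 0 * p 0 k ^+ 2.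

Lemma quadK (r : 'rV[R]_n) : (r *m K *m r^T) 0 0 = qform (r *m U).
Proof.
rewrite Kf_eq.
have -> : r *m (U *m D *m U^T) *m r^T = (r *m U) *m D *m (r *m U)^T.
  by rewrite trmx_mul !mulmxA.
by rewrite diag_quad /qform; apply: eq_bigr => k _; rewrite mxE.
Qed.

Lemma qform_ge0 p : 0 <= qform p.
Proof. by apply: sumr_ge0 => k _; rewrite mulr_ge0 ?sqr_ge0 ?ltW. Qed.

Lemma qform_eq0 p : qform p = 0 -> p = 0.
Proof.
move=> h; have h0 : forall i, predT i -> 0 <= Fc i 0 * p 0 i ^+ 2.
  by move=> i _; rewrite mulr_ge0 ?sqr_ge0 ?ltW.
apply/matrixP => i j; rewrite (ord1 i) mxE.
by have /eqP := psumr_eq0P h0 h (isT : predT j); rewrite mulf_eq0 gt_eqF // orFb sqrf_eq0 => /eqP.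
Qed.

Let Dinv := diag_mx (\row_k (Fc k 0)^-1).
Let Kinv := U *m Dinv *m U^T.

Lemma KKinv : K *m Kinv = 1%:M.
Proof.
rewrite Kf_eq /Kinv !mulmxA -(mulmxA _ U^T U) UU mulmx1 -(mulmxA U D) mulmx_diag.
have -> : \row_j (Fc^T 0 j * (\row_k (Fc k 0)^-1) 0 j) = const_mx 1.
  by apply/rowP => k; have := Fpos k; rewrite /fourier !mxE => Fk; rewrite divff // gt_eqF.
by rewrite diag_const_mx mulmx1 UUt.
Qed.

Lemma K_unit : K \in unitmx.
Proof. by case: (mulmx1_unit KKinv). Qed.

Lemma invK : invmx K = Kinv.
Proof. by rewrite -[Kinv](mulKmx K_unit) KKinv mulmx1. Qed.

Lemma CS (r : 'rV[R]_n) (c : 'cV[R]_n) :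
  (r *m c) 0 0 ^+ 2 <= (r *m K *m r^T) 0 0 * (c^T *m invmx K *m c) 0 0.
Proof.
rewrite quadK invK /Kinv.
have -> : c^T *m (U *m Dinv *m U^T) *m c = (c^T *m U) *m Dinv *m (c^T *m U)^T.
  by rewrite trmx_mul trmxK !mulmxA.
rewrite diag_quad.
have -> : r *m c = (r *m U) *m (c^T *m U)^T by rewrite trmx_mul trmxK mulmxA -(mulmxA r) UUt mulmx1.
rewrite mxE.
have := @scalar_CS _ _ (fun k => Fc k 0) (fun k => (r *m U) 0 k) (fun k => (c^T *m U) 0 k) Fpos.
congr (_ <= _ * _); [congr (_ ^+ 2) | ]; apply: eq_bigr => k _; rewrite !mxE //.
Qed.

Lemma K_sym : K^T = K.
Proof. by rewrite Kf_eq !trmx_mul trmxK tr_diag_mx !mulmxA. Qed.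


Variables (N : nat) (w : 'I_N -> 'I_n).
Hypothesis w_inj : injective w.
Let E : 'M[R]_(n, N) := Emb w.
Let G := KfW U f w.

Lemma KfW_eq : G = E^T *m K *m E.
Proof. by apply/matrixP => k l; rewrite mul_Emb Emb_tr_mul !mxE. Qed.

Lemma interp_eq x : interp U f w x = K *m E *m (invmx G *m (E^T *m x)).
Proof.
have -> : E^T *m x = \col_k x (w k) 0.
  by apply/matrixP => k l; rewrite (ord1 l) Emb_tr_mul !mxE.
apply/matrixP => i l; rewrite (ord1 l) /interp summxE [RHS]mxE.
apply: eq_bigr => k _; rewrite mul_Emb !mxE mulrC.
by [].
Qed.

Lemma G_unit : G \in unitmx.
Proof.
apply: unit_of_ker => d dG.
have : ((d *m E^T) *m K *m (d *m E^T)^T) 0 0 = 0.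
  by rewrite trmx_mul trmxK !mulmxA -(mulmxA _ E^T) -(mulmxA _ (E^T *m K)) -KfW_eq dG mul0mx mxE.
rewrite quadK => /qform_eq0 h.
have h2 : d *m E^T = 0 by rewrite -[d *m E^T]mulmx1 -UUt mulmxA h mul0mx.
by rewrite -[d]mulmx1 -(Emb_orth w_inj) mulmxA -/E h2 mul0mx.
Qed.


Lemma quad_split (a : 'rV[R]_n) (s : 'rV[R]_N) : a *m K *m E = 0 ->
  (a *m K *m a^T) 0 0 <= ((a + s *m E^T) *m K *m (a + s *m E^T)^T) 0 0.
Proof.
move=> aKE; set b := s *m E^T.
have e1 : a *m K *m b^T = 0 by rewrite /b trmx_mul trmxK mulmxA aKE mul0mx.
clearbody b.
have e2 : b *m K *m a^T = 0.
  by apply: trmx_inj; rewrite !trmx_mul trmxK K_sym mulmxA e1 trmx0.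
rewrite linearD /= !mulmxDl !mulmxDr e1 e2 addr0 add0r mxDij lerDl quadK.
exact: qform_ge0.
Qed.

Section AtV.
Variable v : 'I_n.
Let ev : 'rV[R]_n := delta_mx 0 v.
Let a := ev - ev *m K *m E *m invmx G *m E^T.

Lemma err_eq (x : 'cV[R]_n) : x v 0 - interp U f w x v 0 = (a *m x) 0 0.
Proof. by rewrite interp_eq /a mulmxBl mxBij -!mulmxA /ev !rowv_mul. Qed.

Lemma aKE : a *m K *m E = 0.
Proof.
rewrite /a !mulmxBl.
have -> : ev *m K *m E *m invmx G *m E^T *m K *m E = ev *m K *m E.
  by rewrite -(mulmxA _ E^T) -(mulmxA _ (E^T *m K)) -KfW_eq mulmxKV // G_unit.
by rewrite subrr.
Qed.

Lemma optim (u : 'rV[R]_N) :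
  (a *m K *m a^T) 0 0 <= ((ev - u *m E^T) *m K *m (ev - u *m E^T)^T) 0 0.
Proof.
have -> : ev - u *m E^T = a + (ev *m K *m E *m invmx G - u) *m E^T.
  by rewrite /a mulmxBl addrA subrK.
exact: quad_split aKE.
Qed.

End AtV.

Section Norming.
Variable M : nat.
Hypothesis leMn : (M <= n)%N.
Hypothesis hnorm : norming U M w.

Let P : 'M[R]_(n, M) := Emb (widen_ord leMn).
Let H := E^T *m (U *m P).
Let Q := H^T *m H.

Lemma widen_inj : injective (widen_ord leMn).
Proof. by move=> i j /(congr1 val) /= h; apply: val_inj. Qed.

Lemma codom_widen (k : 'I_n) : (k \in codom (widen_ord leMn)) = (k < M)%N.
Proof.
apply/codomP/idP => [[j ->] | h]; first exact: (ltn_ord j).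
by exists (Ordinal h); apply: val_inj.
Qed.

Lemma Pg_out (g : 'cV[R]_M) (k : 'I_n) : ~~ (k < M)%N -> (P *m g) k 0 = 0.
Proof.
move=> hk; rewrite mxE big1 // => j _; rewrite mxE.
have -> : (k == widen_ord leMn j) = false.
  by apply/negbTE; apply: contraNneq hk => ->; exact: (ltn_ord j).
by rewrite mul0r.
Qed.

Lemma maskP (g : 'cV[R]_M) : \col_k (if (k < M)%N then (P *m g) k 0 else 0) = P *m g.
Proof.
apply/matrixP => k l; rewrite (ord1 l) [LHS]mxE; case: ifP => // /negbT /Pg_out ->.
by [].
Qed.

Lemma colsum (c : 'I_n -> R) : \sum_(k < n | (k < M)%N) c k *: col k U
  = U *m \col_k (if (k < M)%N then c k else 0).
Proof.
apply/matrixP => i l; rewrite (ord1 l) summxE [RHS]mxE big_mkcond /=.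
by apply: eq_bigr => k _; rewrite !mxE; case: ifP => _; rewrite ?mulr0 // mulrC.
Qed.

Lemma BM_eq (y : 'cV[R]_n) :
  BM U M y = U *m \col_k (if (k < M)%N then (U^T *m y) k 0 else 0).
Proof.
rewrite /BM -colsum; apply: eq_bigr => k _; congr (_ *: _).
by rewrite tr_col -row_mul mxE.
Qed.

Lemma BM_B (g : 'cV[R]_M) : BM U M (U *m (P *m g)) = U *m (P *m g).
Proof. by rewrite BM_eq [U^T *m _]mulmxA UU mul1mx maskP. Qed.

Lemma inBM_B (g : 'cV[R]_M) : inBM U M (U *m (P *m g)).
Proof. by exists (fun k => (P *m g) k 0); rewrite colsum maskP. Qed.

Lemma SW_eq (y : 'cV[R]_n) : SW w y = E *m (E^T *m y).
Proof. by rewrite /E (Emb_Embt y w_inj). Qed.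

Lemma enorm_SW (y : 'cV[R]_n) : enorm (SW w y) = enorm (E^T *m y).
Proof. by rewrite SW_eq enorm_iso // /E (Emb_orth w_inj). Qed.

Lemma PtP : P^T *m P = 1%:M.
Proof. exact: (Emb_orth widen_inj). Qed.

Lemma Q_unit : Q \in unitmx.
Proof.
apply: unit_of_ker => d dQ.
have h1 : d *m H^T = 0 by apply: ker_gram.
have h2 : E^T *m (U *m (P *m d^T)) = 0.
  have -> : E^T *m (U *m (P *m d^T)) = (d *m H^T)^T.
    by rewrite trmx_mul trmxK /H !mulmxA.
  by rewrite h1 trmx0.
have h3 := hnorm _ _ (inBM_B d^T) (inBM_B 0).
rewrite !BM_B !mulmx0 !SW_eq h2 !mulmx0 in h3.
have h4 : U *m (P *m d^T) = 0 by apply: h3.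
apply: trmx_inj; rewrite trmx0.
rewrite -[d^T]mul1mx -PtP -mulmxA -[P *m d^T]mul1mx -UU.
by rewrite -[U^T *m U *m _]mulmxA h4 !mulmx0.
Qed.

Let T := invmx Q *m H^T.

Lemma inBM_form y : inBM U M y -> exists g : 'cV[R]_M, y = U *m (P *m g).
Proof.
case=> c ->; rewrite colsum.
exists (P^T *m \col_k (if (k < M)%N then c k else 0)); congr (U *m _).
rewrite /P (Emb_Embt _ widen_inj); apply/matrixP => k l; rewrite !mxE codom_widen.
by case: ifP.
Qed.

Lemma set_bound y : inBM U M y -> SW w (BM U M y) != 0 ->
  enorm y / enorm (SW w (BM U M y)) <= cst T.
Proof.
move=> /inBM_form [g ->]; rewrite BM_B => SW0; rewrite enorm_SW.
have HE : E^T *m (U *m (P *m g)) = H *m g by rewrite /H !mulmxA.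
rewrite HE [enorm (U *m _)]enorm_iso // [enorm (P *m _)]enorm_iso ?PtP //.
have pos : 0 < enorm (H *m g).
  rewrite lt0r enorm_ge0 andbT; apply/eqP => /enorm_eq0 h0.
  by move: SW0; rewrite SW_eq HE h0 mulmx0 eqxx.
rewrite ler_pdivrMr //.
have {1}-> : g = T *m (H *m g).
  by rewrite /T -mulmxA [H^T *m _]mulmxA mulKmx // Q_unit.
exact: normbound.
Qed.

Lemma op_ub y : inBM U M y -> SW w (BM U M y) != 0 ->
  enorm y / enorm (SW w (BM U M y)) <= opnorm_inv U M w.
Proof.
move=> yB yS; rewrite /opnorm_inv.
set S := (X in sup X).
have hs : has_sup S.
  split; first by exists (enorm y / enorm (SW w (BM U M y))), y.
  by exists (cst T) => r [y' [h1 h2 ->]]; apply: set_bound.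
by apply: (sup_upper_bound hs); exists y.
Qed.

Lemma op_ge0 : 0 <= opnorm_inv U M w.
Proof.
rewrite /opnorm_inv; set S := (X in sup X).
case: (pselect (exists r, S r)) => [[r Sr]|nS].
  have hs : has_sup S.
    split; first by exists r.
    by exists (cst T) => r' [y' [h1 h2 ->]]; apply: set_bound.
  apply: le_trans (sup_upper_bound hs Sr).
  by case: Sr => y [_ _ ->]; rewrite divr_ge0 // enorm_ge0.
have -> : S = set0.
  by apply/seteqP; split => r // Sr; case: nS; exists r.
by rewrite sup0.
Qed.

Lemma u_exists (v : 'I_n) : exists u : 'rV[R]_N,
  ((delta_mx 0 v : 'rV[R]_n) - u *m E^T) *m U *m P = 0 /\ enorm u^T <= opnorm_inv U M w.
Proof.
set ev : 'rV[R]_n := delta_mx 0 v.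
set b' := ev *m U *m P.
set al := b' *m invmx Q.
have alQ : al *m Q = b' by rewrite /al mulmxKV // Q_unit.
exists (al *m H^T); split.
  have -> : (ev - al *m H^T *m E^T) *m U *m P = b' - al *m Q.
    by rewrite !mulmxBl /Q /H !mulmxA.
  by rewrite alQ subrr.
set y := U *m (P *m al^T).
have ut : (al *m H^T)^T = E^T *m y by rewrite trmx_mul trmxK /H /y !mulmxA.
set t := enorm (al *m H^T)^T.
have t0 : 0 <= t by apply: enorm_ge0.
have t2 : t ^+ 2 = y v 0.
  rewrite /t enorm_sq trmxK.
  have -> : al *m H^T *m (al *m H^T)^T = b' *m al^T.
    by rewrite gram_quad alQ.
  by rewrite /b' /y -!mulmxA /ev rowv_mul.
have yv : y v 0 <= enorm y by apply: le_trans (ler_norm _) (@enorm_comp _ _ y v).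
have tSW : t = enorm (SW w (BM U M y)) by rewrite /y BM_B enorm_SW -/y -ut.
case: (eqVneq (SW w (BM U M y)) 0) => [S0 | Sn].
  by rewrite tSW S0 enorm0; apply: op_ge0.
have := @op_ub y (inBM_B al^T) Sn.
rewrite -tSW => h.
have tp : 0 < t.
  rewrite lt0r t0 andbT tSW; apply/eqP => /enorm_eq0 h0; by rewrite h0 eqxx in Sn.
rewrite ler_pdivrMr // in h.
have : t * t <= opnorm_inv U M w * t by rewrite -expr2 t2 (le_trans yv h).
by rewrite ler_pM2r.
Qed.

Lemma tilde_bound (v : 'I_n) : exists u : 'rV[R]_N,
  ((((delta_mx 0 v : 'rV[R]_n) - u *m E^T) *m K *m ((delta_mx 0 v : 'rV[R]_n) - u *m E^T)^T) 0 0
   <= (\sum_(k < n | (M <= k)%N) fourier U f k 0) * (1 + opnorm_inv U M w) ^+ 2).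
Proof.
have [u [Z ub]] := u_exists v; exists u.
move: Z; set aa := _ - u *m E^T => Z.
have bz : forall k : 'I_n, (k < M)%N -> (aa *m U) 0 k = 0.
  move=> k hk; have := congr1 (fun A : 'M[R]_(1, M) => A 0 (Ordinal hk)) Z.
  rewrite /= /P mul_Emb [LHS]mxE [RHS]mxE.
  by have -> : widen_ord leMn (Ordinal hk) = k by apply: val_inj.
rewrite quadK /qform (bigID (fun k : 'I_n => (M <= k)%N)) /= [X in _ + X]big1 ?addr0; last first.
  by move=> k; rewrite -ltnNge => hk; rewrite bz // expr2 !mulr0.
apply: (@le_trans _ _ (\sum_(k < n | (M <= k)%N) fourier U f k 0 * ((aa *m U) *m (aa *m U)^T) 0 0)).
  apply: ler_sum => k _; apply: ler_wpM2l; first exact: ltW.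
  by rewrite rdotE (bigD1 k) //= lerDl sumr_ge0 // => j _; exact: sqr_ge0.
rewrite -mulr_suml; apply: ler_wpM2l; first by apply: sumr_ge0 => k _; exact: ltW.
rewrite trmx_mul -mulmxA [U *m _]mulmxA UUt mul1mx /aa.
apply: le_trans (@ev_bound _ _ v (u *m E^T)) _.
have -> : enorm (u *m E^T)^T = enorm u^T.
  by rewrite trmx_mul trmxK enorm_iso // /E (Emb_orth w_inj).
have t0 : 0 <= enorm u^T by apply: enorm_ge0.
by rewrite !expr2; apply: ler_pM; rewrite ?lerD2l // addr_ge0.
Qed.

End Norming.

Lemma Cge0 (c : 'cV[R]_n) : 0 <= (c^T *m invmx K *m c) 0 0.
Proof.
rewrite invK /Kinv.
have -> : c^T *m (U *m Dinv *m U^T) *m c = (c^T *m U) *m Dinv *m (c^T *m U)^T.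
  by rewrite trmx_mul trmxK !mulmxA.
rewrite diag_quad; apply: sumr_ge0 => k _; rewrite mulr_ge0 ?sqr_ge0 // mxE invr_ge0 ltW //.
Qed.

End Graph.

Theorem theorem7 (R : realType) (n : nat) (A : 'M[R]_n)
  (U : 'M[R]_n) (lam : 'I_n -> R) (f : 'cV[R]_n)
  (M N : nat) (w : 'I_N -> 'I_n) (x : 'cV[R]_n) :
  A^T = A ->
  (forall i j, 0 <= A i j) ->
  (forall i, 0 < deg A i) ->
  U^T *m U = 1%:M ->
  (forall i j : 'I_n, (i <= j)%N -> lam i <= lam j) ->
  normLap A = U *m diag_mx (\row_i lam i) *m U^T ->
  posdef_fun U f ->
  injective w ->
  (M <= n)%N ->
  norming U M w ->
  \big[Num.max/0]_(v < n) `|x v 0 - interp U f w x v 0|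
    <= (1 + opnorm_inv U M w)
       * Num.sqrt (\sum_(k < n | (M <= k)%N) fourier U f k 0)
       * knorm U f x.
Proof.
move=> _ _ _ UU _ _ hpd winj leMn hnorm.
have Fpos : forall k, 0 < fourier U f k 0.
  move=> k; pose d : 'cV[R]_n := delta_mx k 0.
  case: hpd => _ /(_ (U *m d)).
  have Ud : U^T *m (U *m d) = d by rewrite mulmxA UU mul1mx.
  have nz : U *m d != 0.
    apply/eqP => h; move: Ud; rewrite h mulmx0 => /matrixP /(_ k 0).
    by rewrite /d !mxE !eqxx /= => /eqP; rewrite eq_sym oner_eq0.
  move=> /(_ nz).
  have := @quadK _ _ U f (U *m d)^T; rewrite trmxK => ->.
  have -> : (U *m d)^T *m U = d^T by rewrite -[U in _ *m U]trmxK -trmx_mul Ud.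
  rewrite /qform /d trmx_delta (bigD1 k) //= big1 ?addr0.
    by rewrite !mxE !eqxx /= expr1n mulr1.
  by move=> j /negbTE nj; rewrite !mxE nj /= expr2 !mulr0.
set S := \sum_(k < n | (M <= k)%N) fourier U f k 0.
set op := opnorm_inv U M w.
have S0 : 0 <= S by apply: sumr_ge0 => k _; exact: ltW.
have op0 : 0 <= op by exact: (@op_ge0 _ _ U UU _ w winj M leMn hnorm).
set C := (x^T *m invmx (Kf U f) *m x) 0 0.
have C0 : 0 <= C by exact: (@Cge0 _ _ U f UU Fpos x).
have hv : forall v : 'I_n, `|x v 0 - interp U f w x v 0| <= (1 + op) * Num.sqrt S * knorm U f x.
  move=> v; rewrite err_eq.
  set a := (_ - _) *m x.
  have [u hu] := @tilde_bound _ _ U f UU Fpos _ w winj M leMn hnorm v.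
  have h1 := @CS _ _ U f UU Fpos (delta_mx 0 v - delta_mx 0 v *m Kf U f *m Emb w *m invmx (KfW U f w) *m (Emb w)^T) x.
  have h2 := @optim _ _ U f UU Fpos _ w winj v u.
  have h3 : a 0 0 ^+ 2 <= S * (1 + op) ^+ 2 * C.
    apply: le_trans h1 _; apply: ler_wpM2r => //; exact: le_trans h2 hu.
  rewrite -sqrtr_sqr /knorm -/C.
  apply: le_trans (ler_wsqrtr h3) _.
  have SX : 0 <= S * (1 + op) ^+ 2 by rewrite mulr_ge0 ?sqr_ge0.
  rewrite (sqrtrM C SX) (sqrtrM ((1 + op) ^+ 2) S0) sqrtr_sqr ger0_norm ?addr_ge0 //.
  by rewrite [Num.sqrt S * _]mulrC.
apply: bigmax_le => [|v _]; last exact: hv.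
by rewrite mulr_ge0 ?sqrtr_ge0 // mulr_ge0 ?sqrtr_ge0 // addr_ge0.
Qed.
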